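(* Let $G$ be a graph with vertex set $V=\{v_1,\dots,v_n\}$, and let $G^+$ be the graph with vertex set $V\cup\{v_1^+,\dots,v_n^+\}$ (where the $v_i^+$ are new vertices) and edge set $E(G)\cup\{v_iv_i^+: i=1,\dots,n\}$. Then $G$ is a path graph if and only if $G^+$ is a path graph.
   Context: A graph is a path graph if there are a tree $T$, a collection $\mathcal P$ of paths of $T$ and a bijection $\phi$ from the vertex set of the graph onto $\mathcal P$ such that two vertices $u,v$ are adjacent iff the vertex sets of $\phi(u)$ and $\phi(v)$ intersect. *)

(* Defs.v *)
From mathcomp Require Import all_boot.
Set Implicit Arguments. Unset Strict Implicit. Unset Printing Implicit Defensive.

Definition simple_graph (V : finType) (e : rel V) : Prop :=
  symmetric e /\ irreflexive e.

Definition is_tree (T : finType) (t : rel T) : Prop :=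
  [/\ simple_graph t, 0 < #|T|,
      (forall x y : T, connect t x y) &
      (forall s : seq T, uniq s -> 3 <= size s -> ~~ cycle t s)].

Definition is_tree_path (T : finType) (t : rel T) (P : {set T}) : Prop :=
  exists (x : T) (p : seq T),
    [/\ path t x p, uniq (x :: p) & P = [set z in x :: p]].

(* G = (V, e) is a path graph: there are a tree t, a collection of paths
   of t and a bijection phi from V onto it (i.e. an injective map into the
   paths of t) such that distinct u, v are adjacent iff phi u, phi v meet. *)
Definition is_path_graph (V : finType) (e : rel V) : Prop :=
  exists (T : finType) (t : rel T) (phi : V -> {set T}),
    [/\ is_tree t, injective phi,
        (forall v, is_tree_path t (phi v)) &
        (forall u v, u != v -> (e u v <-> phi u :&: phi v != set0))].

(* G^+ : vertex set V + V, where inl v is v and inr v is the new vertex v^+;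
   edges are those of G plus v v^+ for every v. *)
Definition plus_rel (V : finType) (e : rel V) : rel (V + V) :=
  fun a b =>
    match a, b with
    | inl u, inl v => e u v
    | inl u, inr v => u == v
    | inr u, inl v => u == v
    | inr _, inr _ => false
    end.

(* Main.v *)
Require Import Defs.
From mathcomp Require Import all_boot.
Set Implicit Arguments. Unset Strict Implicit. Unset Printing Implicit Defensive.

Definition ext_rel (T V : finType) (t : rel T) (xv : V -> T) : rel (T + V) :=
  fun a b => match a, b with
  | inl x, inl y => t x y
  | inl x, inr v => x == xv v
  | inr v, inl x => x == xv v
  | inr _, inr _ => false end.

Definition isr (T V : Type) (z : T + V) : bool := if z is inr _ then true else false.
Definition getl (T V : Type) (z : T + V) : option T := if z is inl x then Some x else None.

Lemma all_inl (T V : Type) (s : seq (T + V)) :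
  ~~ has (@isr T V) s -> s = map inl (pmap (@getl T V) s).
Proof. by elim: s => [|[x|v] s IH] //= /IH <-. Qed.

Lemma inr_map_inl (T V : eqType) (v : V) (l : seq T) :
  (inr v \in map (@inl T V) l) = false.
Proof. by elim: l => //= x l IH; rewrite inE IH. Qed.

Lemma inl_map_inl (T V : eqType) (x : T) (l : seq T) :
  (inl x \in map (@inl T V) l) = (x \in l).
Proof. by apply: mem_map => a b []. Qed.

Lemma memS_r (T V : finType) (v w : V) (l : seq T) :
  (inr w \in [set z in inr v :: map (@inl T V) l]) = (w == v).
Proof. by rewrite in_set in_cons inr_map_inl orbF. Qed.

Lemma memS_l (T V : finType) (v : V) (y : T) (l : seq T) :
  (inl y \in [set z in inr v :: map (@inl T V) l]) = (y \in l).
Proof. by rewrite in_set in_cons inl_map_inl. Qed.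

Lemma lr_neq (T V : finType) (y : T) (w : V) : (inl y == inr w :> T + V) = false.
Proof. by []. Qed.

Lemma rl_neq (T V : finType) (y : T) (w : V) : (inr w == inl y :> T + V) = false.
Proof. by []. Qed.

Lemma rr_eq (T V : finType) (v w : V) : (inr v == inr w :> T + V) = (v == w).
Proof. by []. Qed.

Lemma ext_tree (T V : finType) (t : rel T) (xv : V -> T) :
  is_tree t -> is_tree (ext_rel t xv).
Proof.
case=> [[sym irr] n0 conn acyc]; split.
- split.
  + by case=> [x|v] [y|w] //=; rewrite sym.
  + by case=> [x|v] //=; rewrite irr.
- by rewrite card_sum addn_gt0 n0.
- have lift a b : connect t a b -> connect (ext_rel t xv) (inl a) (inl b).
    move/connectP=> [p pth ->]; apply/connectP; exists (map inl p).
      by rewrite path_map.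
    by rewrite last_map.
  have toleaf v : connect (ext_rel t xv) (inr v) (inl (xv v)).
    by apply: connect1 => /=.
  have fromleaf v : connect (ext_rel t xv) (inl (xv v)) (inr v).
    by apply: connect1 => /=.
  case=> [x|v] [y|w].
  + exact: lift.
  + exact: connect_trans (lift _ _ (conn _ _)) (fromleaf w).
  + exact: connect_trans (toleaf v) (lift _ _ (conn _ _)).
  + exact: connect_trans (toleaf v) (connect_trans (lift _ _ (conn _ _)) (fromleaf w)).
- move=> s us ss; apply/negP => cs.
  case: (boolP (has (@isr T V) s)) => [/hasP [[x|v] sv //] _ | hn].
  + have [s' rs] : exists s', rot (index (inr v) s) s = inr v :: s'.
      by eexists; apply: rot_index.
    move: us ss cs; rewrite -(rot_uniq (index (inr v) s)) -(size_rot (index (inr v) s)).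
    rewrite -(rot_cycle (index (inr v) s)) rs.
    case: s' {rs} => [|a q] //; case/lastP: q => [|r b] //.
    rewrite /= rcons_path last_rcons => /and3P[_ /negP nab _] _ /and3P[ar _].
    case: b nab => //= y nab /eqP Ey; case: a ar nab => //= x /eqP -> []; rewrite Ey.
    by rewrite mem_rcons inE eqxx.
  + move: us ss cs; rewrite (all_inl hn) cycle_map size_map.
    rewrite (map_inj_uniq (fun a b => @inl_inj T V a b)) => us ss cs.
    by have := acyc _ us ss; rewrite cs.
Qed.

Lemma fwd (V : finType) (e : rel V) : is_path_graph e -> is_path_graph (plus_rel e).
Proof.
case=> T [t [phi [tr _ tp adj]]].
have H : forall v, exists xp : T * seq T,
    [/\ path t xp.1 xp.2, uniq (xp.1 :: xp.2) & phi v = [set z in xp.1 :: xp.2]].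
  by move=> v; case: (tp v) => x [p [? ? ?]]; exists (x, p).
have [f Hf] := fin_all_exists H.
pose s v := (f v).1 :: (f v).2.
pose xv v := (f v).1.
have phiE v y : (y \in phi v) = (y \in s v).
  by case: (Hf v) => _ _ ->; rewrite inE.
exists (T + V)%type, (ext_rel t xv),
  (fun a => match a with inl v => [set z in inr v :: map inl (s v)]
                       | inr v => [set z in [:: inr v]] end).
split.
- exact: ext_tree.
- case=> [u|u] [v|v] /setP H1.
  + by have := H1 (inr u); rewrite !memS_r eqxx => /esym/eqP ->.
  + by have := H1 (inl (xv u)); rewrite memS_l !inE /xv eqxx.
  + by have := H1 (inl (xv v)); rewrite memS_l !inE /xv eqxx.
  + by have := H1 (inr u); rewrite !inE eqxx => /esym/eqP [->].
- case=> [v|v].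
  + exists (inr v), (map inl (s v)); split => //.
    * rewrite /= eqxx /=; case: (Hf v) => P _ _; by rewrite path_map.
    * rewrite cons_uniq inr_map_inl (map_inj_uniq (fun a b => @inl_inj T V a b)).
      by case: (Hf v).
  + by exists (inr v), [::].
- case=> [u|u] [v|v] nuv; rewrite [plus_rel _ _ _]/=; (split; [move=> huv; apply/set0Pn | move/set0Pn=> [z]]).
  + have uv : u != v by apply: contra nuv => /eqP ->.
    have /set0Pn [y] := (adj u v uv).1 huv.
    rewrite inE => /andP[yu yv]; exists (inl y).
    by rewrite in_setI !memS_l -!phiE yu yv.
  + have uv : u != v by apply: contra nuv => /eqP ->.
    rewrite in_setI; case: z => [y|w].
      rewrite !memS_l => /andP[yu yv]; apply/(adj u v uv).2/set0Pn.
      by exists y; rewrite inE !phiE yu yv.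
    by rewrite !memS_r => /andP[/eqP wu /eqP wv]; rewrite -wu -wv eqxx in uv.
  + by exists (inr v); rewrite in_setI memS_r (eqP huv) !inE !eqxx.
  + rewrite in_setI; case: z => [y|w]; first by rewrite !inE lr_neq andbF.
    by rewrite memS_r !inE rr_eq => /andP[/eqP -> /eqP ->].
  + by exists (inr u); rewrite in_setI memS_r (eqP huv) !inE !eqxx.
  + rewrite in_setI; case: z => [y|w]; first by rewrite !inE lr_neq.
    by rewrite memS_r !inE rr_eq => /andP[/eqP -> /eqP ->].
  + by [].
  + case: z => [y|w]; first by rewrite !inE lr_neq.
    by rewrite !inE !rr_eq => /andP[/eqP wu /eqP wv]; rewrite -wu -wv eqxx in nuv.
Qed.

Lemma bwd (V : finType) (e : rel V) : is_path_graph (plus_rel e) -> is_path_graph e.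
Proof.
case=> T [t [phi [tr inj tp adj]]].
exists T, t, (fun v => phi (inl v)); split => //.
- by move=> u v /inj [].
- by move=> u v uv; apply: (adj (inl u) (inl v)); apply: contra uv => /eqP [->].
Qed.

Theorem lemma4p2 (V : finType) (e : rel V) :
  simple_graph e -> (is_path_graph e <-> is_path_graph (plus_rel e)).
Proof. by move=> _; split; [apply: fwd | apply: bwd]. Qed.
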